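(* Let $F$ be WORDER or WMAJORITY. During a run of (1+1) GP-single on MO-$F$, let $s$ be the number of leaves of the current tree and $k$ the number of expressed variables of the current tree. Then $F$ of the current tree never decreases and the quantity $s-k$ never increases from one iteration to the next. In particular, once the current tree is non-redundant, it stays non-redundant for the rest of the run.
   Context: Fix an integer $n\ge 1$ and real weights $w_1\ge w_2\ge\dots\ge w_n>0$. The terminal set is $T=\{x_1,\bar x_1,\dots,x_n,\bar x_n\}$ ($\bar x_i$ is the complement of $x_i$; $x_i$ is called positive). A syntax tree is either the empty tree or a rooted ordered binary tree whose inner nodes are all labelled by the binary function $J$ (join, exactly two ordered children) and whose leaves are labelled by elements of $T$. The complexity $C(X)$ is the number of nodes of $X$ (0 for the empty tree). The leaf list $l$ of $X$ is the sequence of leaf labels in an inorder traversal. WORDER: build a list $S$ by scanning $l$ from front to rear and appending a literal only if neither it nor its complement is already in $S$; WORDER$(X)=\sum_{i:\,x_i\in S} w_i$; here $x_i$ is expressed iff $x_i\in S$. WMAJORITY: WMAJORITY$(X)=\sum w_i$ over all $i$ such that $x_i$ occurs in $l$ at least once and at least as often as $\bar x_i$; these $x_i$ are the expressed variables. A tree is non-redundant if it is empty or if, with $k$ its number of expressed variables, its complexity is $2k-1$. MO-$F(X)=(F(X),C(X))$, $F$ maximized and $C$ minimized. Mutation (HVL-Prime applied $k$ times): each application chooses uniformly at random one of three operations. Substitute: replace a uniformly random leaf by a uniformly random $u\in T$. Insert: choose a uniformly random node $v$ and uniformly random $u\in T$, replace $v$ by a $J$-node with children $u$ and $v$ in uniformly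 random order (inserting into the empty tree yields the single leaf $u$). Delete: choose a uniformly random leaf $v$ with parent $p$ and sibling $u$, replace $p$ by $u$ (deleting $p$ and $v$; deleting the only leaf of a one-leaf tree yields the empty tree). Single-operation mutation uses $k=1$. (1+1) GP-single on MO-$F$: start with an initial tree $X$; in each iteration let $Y$ be $X$ mutated with $k=1$, and set $X:=Y$ iff $F(Y)>F(X)$, or $F(Y)=F(X)$ and $C(Y)\le C(X)$. *)

(* Defs.v *)
From HB Require Import structures.
From mathcomp Require Import all_boot all_order all_algebra.
Set Implicit Arguments. Unset Strict Implicit. Unset Printing Implicit Defensive.
Import Order.TTheory GRing.Theory Num.Theory.

(* Literals over variables 'I_n : (i, true) is x_i, (i, false) is its complement. *)
Definition lit (n : nat) := ('I_n * bool)%type.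
Definition compl n (a : lit n) : lit n := (a.1, ~~ a.2).
Definition poslit n (i : 'I_n) : lit n := (i, true).
Definition neglit n (i : 'I_n) : lit n := (i, false).

(* Non-empty syntax trees: leaves labelled by terminals, inner nodes are J. *)
Inductive ntree (A : Type) :=
| Leaf of A
| Node of ntree A & ntree A.
Arguments Leaf {A}.
Arguments Node {A}.

Definition tree (n : nat) := option (ntree (lit n)).

Fixpoint nsize A (t : ntree A) : nat :=
  match t with Leaf _ => 1 | Node l r => (nsize l + nsize r).+1 end.
Fixpoint nleaves A (t : ntree A) : seq A :=
  match t with Leaf a => [:: a] | Node l r => nleaves l ++ nleaves r end.

Definition complexity n (X : tree n) : nat :=
  if X is Some t then nsize t else 0.
Definition leaves n (X : tree n) : seq (lit n) :=
  if X is Some t then nleaves t else [::].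
Definition nb_leaves n (X : tree n) : nat := size (leaves X).

Fixpoint worder_scan n (S l : seq (lit n)) : seq (lit n) :=
  match l with
  | [::] => S
  | a :: l' => if (a \in S) || (compl a \in S) then worder_scan S l'
               else worder_scan (rcons S a) l'
  end.

Inductive fitness_kind := WORDER | WMAJORITY.

Definition expressed n (F : fitness_kind) (X : tree n) (i : 'I_n) : bool :=
  match F with
  | WORDER => poslit i \in worder_scan [::] (leaves X)
  | WMAJORITY => (0 < count_mem (poslit i) (leaves X)) &&
                 (count_mem (neglit i) (leaves X) <= count_mem (poslit i) (leaves X))
  end.

Definition fitness (R : realFieldType) n (w : 'I_n -> R) (F : fitness_kind)
  (X : tree n) : R := \sum_(i < n | expressed F X i) w i.

Definition nb_expressed n (F : fitness_kind) (X : tree n) : nat :=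
  #|[pred i | expressed F X i]|.

Definition non_redundant n (F : fitness_kind) (X : tree n) : Prop :=
  X = None \/ complexity X = 2 * nb_expressed F X - 1.

(* One application of HVL-Prime: all possible outcomes. *)
Inductive nsubst A : ntree A -> ntree A -> Prop :=
| sub_leaf a u : nsubst (Leaf a) (Leaf u)
| sub_l l l' r : nsubst l l' -> nsubst (Node l r) (Node l' r)
| sub_r l r r' : nsubst r r' -> nsubst (Node l r) (Node l r').

Inductive ninsert A : ntree A -> ntree A -> Prop :=
| ins_here_l u v : ninsert v (Node (Leaf u) v)
| ins_here_r u v : ninsert v (Node v (Leaf u))
| ins_l l l' r : ninsert l l' -> ninsert (Node l r) (Node l' r)
| ins_r l r r' : ninsert r r' -> ninsert (Node l r) (Node l r').

Inductive ndelete A : ntree A -> ntree A -> Prop :=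
| del_here_l a u : ndelete (Node (Leaf a) u) u
| del_here_r a u : ndelete (Node u (Leaf a)) u
| del_l l l' r : ndelete l l' -> ndelete (Node l r) (Node l' r)
| del_r l r r' : ndelete r r' -> ndelete (Node l r) (Node l r').

Inductive mutation1 n : tree n -> tree n -> Prop :=
| mut_subst t t' : nsubst t t' -> mutation1 (Some t) (Some t')
| mut_subst_empty : mutation1 None None
| mut_insert t t' : ninsert t t' -> mutation1 (Some t) (Some t')
| mut_insert_empty u : mutation1 None (Some (Leaf u))
| mut_delete t t' : ndelete t t' -> mutation1 (Some t) (Some t')
| mut_delete_single a : mutation1 (Some (Leaf a)) None
| mut_delete_empty : mutation1 None None.

Definition accept (R : realFieldType) n (w : 'I_n -> R) F (X Y : tree n) : bool :=
  ((fitness w F X < fitness w F Y)%R) ||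
  ((fitness w F Y == fitness w F X) && (complexity Y <= complexity X)%N).

Definition gp_step (R : realFieldType) n (w : 'I_n -> R) F (X X' : tree n) : Prop :=
  exists Y, mutation1 X Y /\ X' = (if accept w F X Y then Y else X).

(* Main.v *)
Require Import Defs.
From HB Require Import structures.
From mathcomp Require Import all_boot all_order all_algebra.
From mathcomp Require Import zify lra.
Import Order.TTheory GRing.Theory Num.Theory.
Set Implicit Arguments. Unset Strict Implicit.
Lemma hascompl n (a : lit n) S : (a \in S) || (compl a \in S) = has (fun x => x.1 == a.1) S.
Proof.
elim: S => //= x S IH; rewrite !inE -IH.
have -> : (x.1 == a.1) = (a == x) || (compl a == x).
  clear IH; case: a x => [i b] [j c]; rewrite /compl /= !xpair_eqE eq_sym.
  by case: b; case: c; rewrite ?andbT ?andbF ?orbF.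
by case: (a == x); case: (compl a == x); case: (a \in S); case: (compl a \in S).
Qed.

Lemma scanP n (i : 'I_n) l S : (poslit i \in worder_scan S l) =
  (poslit i \in S) || (~~ has (fun x => x.1 == i) S &&
     (ohead [seq a <- l | a.1 == i] == Some (poslit i))).
Proof.
elim: l S => [|a l IH] S /=; first by rewrite andbF orbF.
rewrite hascompl; case: ifP => Ha; rewrite IH.
  case: (eqVneq a.1 i) => ai.
    by rewrite -ai Ha.
  by [].
rewrite mem_rcons inE has_rcons.
case: (eqVneq a.1 i) => ai.
  have Hn : poslit i \in S = false.
    apply/negbTE/negP => Hin; move/negbT: Ha => /hasPn /(_ _ Hin); by rewrite ai eqxx.
  subst i; rewrite Hn /= orbF; move: Ha => /= Ha. by rewrite orbF (negbT Ha) /= eq_sym.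
have -> : (poslit i == a) = false by apply/negbTE; apply: contra ai => /eqP <-.
by [].
Qed.
Section S.
Variable (R : realFieldType) (n : nat) (w : 'I_n -> R).
Hypothesis Hwpos : forall i, (0 < w i)%R.

Lemma step1 (P P' : pred 'I_n) a (H : forall i, i != a -> P i = P' i) :
  (\sum_(i | P' i) w i = \sum_(i | P i) w i +
     ((if P' a then w a else 0) - (if P a then w a else 0)))%R /\
  (#|[pred i | P' i]| + P a = #|[pred i | P i]| + P' a)%N.
Proof.
split.
  rewrite (big_mkcond P) (big_mkcond P') /= (bigD1 a) //= [in RHS](bigD1 a) //=.
  rewrite (eq_bigr (fun i => if P i then w i else 0)%R) /=; last by move=> i /H ->.
  lra.
rewrite (cardD1 a) [in RHS](cardD1 a) !inE.
match goal with |- (?p + ?X + ?q = ?q + ?Y + ?p)%N => have E : X = Y end.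
  by apply: eq_card => i; rewrite !inE; case: eqVneq => //= /H ->.
rewrite E; by case: (P a); case: (P' a) => /=; lia.
Qed.

Lemma cons_ins (P P' : pred 'I_n) a (H : forall i, i != a -> P i = P' i) :
  (\sum_(i | P i) w i < \sum_(i | P' i) w i)%R ->
  (#|[pred i | P i]|.+1 <= #|[pred i | P' i]|)%N.
Proof.
case: (step1 H) => -> Hk; have := Hwpos a.
case: (P a) Hk; case: (P' a) => /= Hk ha; try lia;
  move=> Hlt; exfalso; move: Hlt; apply/negP; rewrite -leNgt; lra.
Qed.

Lemma cons_del (P P' : pred 'I_n) a (H : forall i, i != a -> P i = P' i) :
  (#|[pred i | P i]| <= #|[pred i | P' i]|.+1)%N.
Proof. case: (step1 H) => _; case: (P a); case: (P' a) => /=; lia. Qed.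

Lemma cons_sub (P P' : pred 'I_n) a b
  (H : forall i, i != a -> i != b -> P i = P' i) :
  (\sum_(i | P i) w i <= \sum_(i | P' i) w i)%R ->
  (#|[pred i | P i]| <= #|[pred i | P' i]|)%N.
Proof.
pose Q := [pred i | if i == b then P' i else P i].
have H1 : forall i, i != b -> P i = Q i by move=> i /negbTE hi; rewrite /Q /= hi.
have H2 : forall i, i != a -> Q i = P' i.
  by move=> i hi; rewrite /Q /=; case: eqVneq => // hb; apply: H.
case: (step1 H1) => E1 Hk1; case: (step1 H2) => E2 Hk2; rewrite E2 E1.
have ha := Hwpos a; have hb := Hwpos b.
have Qb : Q b = P' b by rewrite /Q /= eqxx.
move: Hk1 Hk2; rewrite Qb.
case: (P b); case: (P' b); case: (Q a); case: (P' a) => /= Hk1 Hk2; try lia;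
  move=> Hle; exfalso; move: Hle; apply/negP; rewrite -ltNge; lra.
Qed.
End S.
Lemma nsize_leaves A (t : ntree A) : (nsize t + 1 = 2 * size (nleaves t))%N.
Proof. elim: t => [a|l IHl r IHr] //=; rewrite size_cat; lia. Qed.

Lemma complexity_leaves n (X : tree n) :
  (complexity X + (0 < nb_leaves X) = 2 * nb_leaves X)%N /\
  (X <> None -> 0 < nb_leaves X)%N.
Proof.
case: X => [t|] //=; rewrite /nb_leaves /=.
have := nsize_leaves t; split; first by move: H; case: (size _) => //=; lia.
move=> _; lia.
Qed.

Lemma subst_leaves A (t t' : ntree A) : nsubst t t' ->
  exists l1 l2 a u, nleaves t = l1 ++ a :: l2 /\ nleaves t' = l1 ++ u :: l2.
Proof.
elim=> [a u|l l' r _ [l1 [l2 [a [u [E1 E2]]]]]|l r r' _ [l1 [l2 [a [u [E1 E2]]]]]].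
- by exists [::], [::], a, u.
- by exists l1, (l2 ++ nleaves r), a, u; rewrite /= E1 E2 -!catA.
- by exists (nleaves l ++ l1), l2, a, u; rewrite /= E1 E2 -!catA.
Qed.

Lemma insert_leaves A (t t' : ntree A) : ninsert t t' ->
  exists l1 l2 u, nleaves t = l1 ++ l2 /\ nleaves t' = l1 ++ u :: l2.
Proof.
elim=> [u v|u v|l l' r _ [l1 [l2 [u [E1 E2]]]]|l r r' _ [l1 [l2 [u [E1 E2]]]]].
- by exists [::], (nleaves v), u.
- by exists (nleaves v), [::], u; rewrite /= cats0.
- by exists l1, (l2 ++ nleaves r), u; rewrite /= E1 E2 -!catA.
- by exists (nleaves l ++ l1), l2, u; rewrite /= E1 E2 -!catA.
Qed.

Lemma delete_leaves A (t t' : ntree A) : ndelete t t' ->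
  exists l1 l2 u, nleaves t' = l1 ++ l2 /\ nleaves t = l1 ++ u :: l2.
Proof.
elim=> [u v|u v|l l' r _ [l1 [l2 [u [E1 E2]]]]|l r r' _ [l1 [l2 [u [E1 E2]]]]].
- by exists [::], (nleaves v), u.
- by exists (nleaves v), [::], u; rewrite /= cats0.
- by exists l1, (l2 ++ nleaves r), u; rewrite /= E1 E2 -!catA.
- by exists (nleaves l ++ l1), l2, u; rewrite /= E1 E2 -!catA.
Qed.

Lemma mut_cases n (X Y : tree n) : mutation1 X Y ->
  [\/ Y = X,
   (exists l1 l2 a u, leaves X = l1 ++ a :: l2 /\ leaves Y = l1 ++ u :: l2),
   (exists l1 l2 u, leaves X = l1 ++ l2 /\ leaves Y = l1 ++ u :: l2) |
   (exists l1 l2 u, leaves Y = l1 ++ l2 /\ leaves X = l1 ++ u :: l2)].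
Proof.
case=> [t t' /subst_leaves H|| t t' /insert_leaves H| u| t t' /delete_leaves H| a|].
- by apply: Or42.
- by apply: Or41.
- by apply: Or43.
- by apply: Or43; exists [::], [::], u.
- by apply: Or44.
- by apply: Or44; exists [::], [::], a.
- by apply: Or41.
Qed.

Definition exprL n F (l : seq (lit n)) (i : 'I_n) : bool :=
  match F with
  | WORDER => poslit i \in worder_scan [::] l
  | WMAJORITY => (0 < count_mem (poslit i) l) &&
                 (count_mem (neglit i) l <= count_mem (poslit i) l)
  end.

Lemma exprL_ins n F l1 l2 (u : lit n) i : u.1 != i ->
  exprL F (l1 ++ u :: l2) i = exprL F (l1 ++ l2) i.
Proof.
move=> H.
have Hp : (u == poslit i) = false by apply/negbTE; apply: contra H => /eqP ->.
have Hn : (u == neglit i) = false by apply/negbTE; apply: contra H => /eqP ->.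
case: F => /=.
  by rewrite !scanP /= !filter_cat /= (negbTE H).
by rewrite !count_cat /= Hp Hn.
Qed.

Lemma exprL_mem n F (l : seq (lit n)) i : exprL F l i -> poslit i \in l.
Proof.
case: F => /=.
  rewrite scanP /= => /eqP H.
  have : poslit i \in [seq a <- l | a.1 == i].
    by move: H; case: [seq a <- l | a.1 == i] => //= x s [->]; rewrite mem_head.
  by rewrite mem_filter => /andP [].
by case/andP => h _; rewrite -has_pred1 has_count.
Qed.

Lemma card_le n F (l : seq (lit n)) : (#|[pred i | exprL F l i]| <= size l)%N.
Proof.
rewrite -(@card_image _ _ (@poslit n)); last by move=> i j [].
apply: leq_trans (card_size l); apply: subset_leq_card.
by apply/subsetP => x /imageP [i Hi ->]; apply: (@exprL_mem _ F); move: Hi; rewrite inE.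
Qed.

Lemma step_mono (R : realFieldType) n (w : 'I_n -> R)
  (Hwpos : forall i : 'I_n, (0 < w i)%R) F (X X' : tree n) :
  gp_step w F X X' ->
  (fitness w F X <= fitness w F X')%R /\
  (nb_leaves X' + nb_expressed F X <= nb_leaves X + nb_expressed F X')%N.
Proof.
case=> Y [HM ->]; case: ifP => Hacc; last by split.
have Hf : (fitness w F X <= fitness w F Y)%R.
  by move: Hacc => /orP [/ltW|/andP [/eqP -> _]].
split=> //.
have [CX _] := complexity_leaves X; have [CY _] := complexity_leaves Y.
move: Hacc Hf CX CY.
rewrite /accept /nb_expressed /nb_leaves.
change (fitness w F X) with (\sum_(i < n | exprL F (leaves X) i) w i)%R.
change (fitness w F Y) with (\sum_(i < n | exprL F (leaves Y) i) w i)%R.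
change [pred i | expressed F X i] with [pred i | exprL F (leaves X) i].
change [pred i | expressed F Y i] with [pred i | exprL F (leaves Y) i].
rewrite /nb_leaves.
case: (mut_cases HM) => [->|[l1 [l2 [a [u [EX EY]]]]]|[l1 [l2 [u [EX EY]]]]|[l1 [l2 [u [EY EX]]]]];
  rewrite ?EX ?EY => Hacc Hf CX CY.
- by [].
- rewrite !size_cat /= leq_add2l; apply: (cons_sub Hwpos (a := a.1) (b := u.1)) Hf.
  by move=> i ha hu; rewrite !exprL_ins // eq_sym.
- have Hlt : (\sum_(i < n | exprL F (l1 ++ l2) i) w i <
              \sum_(i < n | exprL F (l1 ++ u :: l2) i) w i)%R.
    move: Hacc => /orP [//|/andP [_ Hc]]; exfalso.
    move: CX CY Hc; rewrite !size_cat /=; lia.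
  have := cons_ins Hwpos (a := u.1) _ Hlt.
  have H : forall i, i != u.1 -> exprL F (l1 ++ l2) i = exprL F (l1 ++ u :: l2) i.
    by move=> i hi; rewrite exprL_ins // eq_sym.
  move=> /(_ H); rewrite !size_cat /=; lia.
- have H : forall i, i != u.1 -> exprL F (l1 ++ u :: l2) i = exprL F (l1 ++ l2) i.
    by move=> i hi; rewrite exprL_ins // eq_sym.
  have := cons_del w (a := u.1) H; rewrite !size_cat /=; lia.
Qed.

Lemma nonred_iff n F (X : tree n) :
  non_redundant F X <-> (nb_leaves X <= nb_expressed F X)%N.
Proof.
have Hk : (nb_expressed F X <= nb_leaves X)%N by apply: card_le.
have [CX HX] := complexity_leaves X.
rewrite /non_redundant; split.
  case=> [->|]; first by rewrite /nb_leaves.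
  case: X CX HX Hk => [t|] CX HX Hk //=.
  have := HX ltac:(discriminate); move: CX; simpl complexity; lia.
case: X CX HX Hk => [t|] CX HX Hk Hle; last by left.
right; have := HX ltac:(discriminate); move: CX Hle; simpl complexity; lia.
Qed.

Local Open Scope ring_scope.

Theorem mainTheorem4 (R : realFieldType) (n : nat) (w : 'I_n -> R)
  (Hn : (1 <= n)%N)
  (Hwpos : forall i : 'I_n, 0 < w i)
  (Hwmono : forall i j : 'I_n, (i <= j)%N -> w j <= w i)
  (F : fitness_kind) (run : nat -> tree n)
  (Hrun : forall t : nat, gp_step w F (run t) (run t.+1)) :
  (forall t : nat,
     fitness w F (run t) <= fitness w F (run t.+1) /\
     (nb_leaves (run t.+1) + nb_expressed F (run t)
        <= nb_leaves (run t) + nb_expressed F (run t.+1))%N) /\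
  (forall t : nat, non_redundant F (run t) ->
     forall t' : nat, (t <= t')%N -> non_redundant F (run t')).
Proof.
have Hs := fun t => step_mono Hwpos (Hrun t).
split=> // t /nonred_iff Ht t' Htt'.
apply/nonred_iff; elim: t' Htt' => [|t' IH].
  by rewrite leqn0 => /eqP <-.
rewrite leq_eqVlt => /orP [/eqP <- //|Hlt].
have := IH Hlt; have [_ H] := Hs t'; lia.
Qed.
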